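(* Let $n$ be a positive integer and let $\mathcal{B}$ be a balanced bipartite graph on $2n$ vertices with parts $V_1$ and $V_2$ such that $\delta(\mathcal{B})\geq\frac{n}{2}+1$. If $S\subseteq V(\mathcal{B})$ satisfies $|S|=n+1$ and $\mathcal{B}[S]$ is a forest, then $\min\{|S\cap V_1|,|S\cap V_2|\}\in\{1,2,\frac{n}{2}\}$.
   Context: All graphs are finite and simple. A balanced bipartite graph on $2n$ vertices is a bipartite graph with a given bipartition $(V_1,V_2)$ where $|V_1|=|V_2|=n$. $\delta(G)$ denotes the minimum degree of $G$, and $G[S]$ the subgraph induced by $S\subseteq V(G)$. *)

(* Defs.v *)
From mathcomp Require Import all_boot.
Set Implicit Arguments. Unset Strict Implicit. Unset Printing Implicit Defensive.

Definition simple_graph (T : finType) (e : rel T) : Prop :=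
  symmetric e /\ irreflexive e.

Definition deg (T : finType) (e : rel T) (v : T) : nat := #|[set u | e v u]|.

Definition balanced_bipartite (T : finType) (e : rel T) (n : nat)
    (V1 V2 : {set T}) : Prop :=
  [/\ V1 :&: V2 = set0, V1 :|: V2 = [set: T], #|V1| = n, #|V2| = n &
      forall u v, e u v ->
        ((u \in V1) && (v \in V2)) || ((u \in V2) && (v \in V1))].

Definition induced_forest (T : finType) (e : rel T) (S : {set T}) : Prop :=
  forall c : seq T, uniq c -> {subset c <= S} -> 3 <= size c -> ~~ cycle e c.

(* Main.v *)
Require Import Defs.
From mathcomp Require Import all_boot zify.
Set Implicit Arguments. Unset Strict Implicit. Unset Printing Implicit Defensive.

Section Forest.
Variables (T : finType) (e : rel T).
Hypothesis esym : symmetric e.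
Hypothesis eirr : irreflexive e.

Definition dS (S : {set T}) v := #|[set u in S | e v u]|.

Lemma grow (S : {set T}) (Hdeg : forall x, x \in S -> 1 < dS S x) x0 (Hx0 : x0 \in S) k :
 (exists c : seq T, [/\ uniq c, {subset c <= S}, 3 <= size c & cycle e c]) \/
 (exists x r, [/\ uniq (x :: r), {subset x :: r <= S}, path e x r & size r = k]).
Proof.
elim: k => [|k [Hc|[x [r [Hu Hs Hp Hk]]]]]; first by right; exists x0, [::]; split => // y; rewrite inE => /eqP->.
- by left.
set z := head x r.
have xS : x \in S by apply: Hs; rewrite inE eqxx.
have : 0 < #|[set u in S | e x u] :\ z|.
  have := Hdeg x xS; rewrite /dS (cardsD1 z); case: (z \in _) => /=; lia.
case/card_gt0P => y; rewrite !inE => /andP[yz /andP[yS exy]].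
case yq: (y \in x :: r); last first.
  right; exists y, (x :: r); split => //.
  - by rewrite cons_uniq yq Hu.
  - by move=> w; rewrite inE => /orP[/eqP->|]; [|apply: Hs].
  - by rewrite /= esym exy Hp.
  - by rewrite /= Hk.
left.
move: yq; rewrite inE => /orP[/eqP yx|yr]; first by move: exy; rewrite yx eirr.
rewrite /z in yz; clear z.
move: yr yz Hu Hs Hp Hk. case/splitPr => r1 r2 yz Hu Hs Hp Hk.
exists (x :: rcons r1 y); split.
- move: Hu; rewrite -cats1 /= !mem_cat !cat_uniq /= !inE !negb_or.
  by case/andP=> /and3P[-> -> _] /and3P[-> /andP[-> _] _].
- move=> w; rewrite inE mem_rcons inE => H; apply: Hs.
  by rewrite inE mem_cat inE; case/orP: H => [->|/orP[->|->]]; rewrite ?orbT.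
- case: r1 yz {Hu Hs Hp Hk} => [|w r1] yz; first by move: yz; rewrite /= eqxx.
  by rewrite /= size_rcons.
- rewrite /= rcons_path last_rcons esym exy andbT rcons_path.
  by move: Hp; rewrite cat_path /= => /and3P[-> ->].
Qed.

Lemma low_deg (S : {set T}) x0 : x0 \in S -> induced_forest e S ->
  exists2 v, v \in S & dS S v <= 1.
Proof.
move=> x0S HF.
case: (pickP (fun v => (v \in S) && (dS S v <= 1))) => [v /andP[]|H]; first by exists v.
have Hdeg : forall x, x \in S -> 1 < dS S x.
  by move=> x xS; have := H x; rewrite /= xS /=; case: leqP.
case: (grow Hdeg x0S #|S|) => [[c [Hu Hs Hz Hc]]|[x [r [Hu Hs _ Hk]]]].
  by move: (HF c Hu Hs Hz); rewrite Hc.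
have := @uniq_leq_size _ _ (enum S) Hu (fun w wi => ltac:(by rewrite mem_enum; apply: Hs)).
by rewrite -cardE /= Hk ltnn.
Qed.

Lemma forest_sum (S : {set T}) : induced_forest e S ->
  \sum_(v in S) dS S v <= 2 * (#|S| - 1).
Proof.
have [k] := ubnP #|S|; elim: k S => // k IH S ltSk HF.
case: (set_0Vmem S) => [->|[x0 x0S]]; first by rewrite big_set0.
have [v vS dv] := low_deg x0S HF.
set S' := S :\ v.
have HF' : induced_forest e S'.
  by move=> c u sc sz; apply: HF => // w /sc; rewrite inE => /andP[].
have cS : #|S| = #|S'|.+1 by rewrite (cardsD1 v S) vS.
have IH' := IH S' ltac:(by rewrite -ltnS -cS) HF'.
have dvS : dS S v <= #|S'|.
  rewrite /dS /S'; apply: subset_leq_card; apply/subsetP => u; rewrite !inE => /andP[-> evu].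
  by rewrite andbT; apply/eqP => uv; move: evu; rewrite uv eirr.
rewrite (big_setD1 v vS) /= -/S'.
have E : \sum_(u in S') dS S u = \sum_(u in S') dS S' u + dS S v.
  have -> : \sum_(u in S') dS S u = \sum_(u in S') (dS S' u + (e u v : nat)).
    apply: eq_bigr => u uS'; rewrite /dS (cardsD1 v [set w in S | e u w]) inE vS /= addnC.
    congr (_ + _); apply: eq_card => w; rewrite !inE; by case: (w == v).
  rewrite big_split /=; congr (_ + _).
  rewrite /dS -sum1_card big_mkcond /= [RHS]big_mkcond /=.
  apply: eq_bigr => u _; rewrite !inE esym.
  case: (u =P v) => [->|_] /=; first by rewrite eirr andbF.
  by case: (u \in S); case: (e v u).
rewrite E; lia.
Qed.
End Forest.

Lemma arith n a b D c : a + b = n.+1 -> a <= b -> b <= n -> a * c <= D -> D <= n ->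
  n + 2 <= 2 * c + 2 * (n - b) -> a = 1 \/ a = 2 \/ 2 * a = n.
Proof.
move=> ab alb bn ac Dn hc.
have a1 : 1 <= a by lia.
case: (ltnP a 3) => a3; first lia.
case: (ltngtP (2 * a) n) => h; last by right; right.
- have h2 : 1 <= (a - 2) * (n - 2 * a) by rewrite muln_gt0; lia.
  have : a * (2 * c) <= 2 * n by lia.
  have : a * (n + 4 - 2 * a) <= a * (2 * c) by apply: leq_mul; lia.
  nia.
- have : 2 <= c by lia.
  nia.
Qed.

Lemma nb_bound (T : finType) (e : rel T) (S Y : {set T}) v :
  {subset [set u | e v u] <= Y} -> deg e v <= dS e S v + (#|Y| - #|S :&: Y|).
Proof.
move=> HY; rewrite /deg -(cardsID S [set u | e v u]).
have -> : [set u | e v u] :&: S = [set u in S | e v u].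
  by apply/setP => u; rewrite !inE andbC.
rewrite leq_add2l -(cardsID S Y) setIC addnC addnK.
apply: subset_leq_card; apply/subsetP => u; rewrite !inE => /andP[-> eu] /=.
by apply: HY; rewrite inE.
Qed.

Lemma dS_sum (T : finType) (e : rel T) (S Y : {set T}) v :
  {subset [set u | e v u] <= Y} -> dS e S v = \sum_(u in S :&: Y) (e v u : nat).
Proof.
move=> HY; rewrite /dS -sum1_card big_mkcond [RHS]big_mkcond /=.
apply: eq_bigr => u _; rewrite !inE.
case evu: (e v u); last by rewrite !andbF; case: (_ && _).
have := HY u; rewrite inE evu => /(_ isT) ->.
by rewrite !andbT.
Qed.

Theorem theorem2p3 (n : nat) (T : finType) (e : rel T) (V1 V2 : {set T}) :
  0 < n ->
  simple_graph e ->
  balanced_bipartite e n V1 V2 ->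
  (* delta(B) >= n/2 + 1, i.e. 2 * deg v >= n + 2 *)
  (forall v : T, n + 2 <= 2 * deg e v) ->
  forall S : {set T}, #|S| = n.+1 -> induced_forest e S ->
  let m := minn #|S :&: V1| #|S :&: V2| in
  m = 1 \/ m = 2 \/ 2 * m = n.
Proof.
move=> n0 [esym eirr] [dis cov c1 c2 bip] Hdeg S cS HF m.
have V2C : V2 = ~: V1.
  apply/setP => u; rewrite inE.
  have h1 : (u \in V1) || (u \in V2) by rewrite -in_setU cov inE.
  have h2 : ~~ ((u \in V1) && (u \in V2)) by rewrite -in_setI dis inE.
  by move: h1 h2; case: (u \in V1); case: (u \in V2).
have SV2 : S :\: V1 = S :&: V2 by rewrite V2C setDE.
set a := #|S :&: V1|. set b := #|S :&: V2|.
have ab : a + b = n.+1 by rewrite -cS -(cardsID V1 S) SV2.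
have an : a <= n by rewrite -c1; apply: subset_leq_card; apply: subsetIr.
have bn : b <= n by rewrite -c2; apply: subset_leq_card; apply: subsetIr.
have N1 : forall v, v \in V1 -> {subset [set u | e v u] <= V2}.
  move=> v v1 u; rewrite inE => /bip /orP[/andP[_ ->]//|/andP[v2 _]].
  have : v \in V1 :&: V2 by rewrite inE v1 v2.
  by rewrite dis inE.
have N2 : forall v, v \in V2 -> {subset [set u | e v u] <= V1}.
  move=> v v2 u; rewrite inE => /bip /orP[/andP[v1 _]|/andP[_ ->]//].
  have : v \in V1 :&: V2 by rewrite inE v1 v2.
  by rewrite dis inE.
set D1 := \sum_(v in S :&: V1) dS e S v.
set D2 := \sum_(v in S :&: V2) dS e S v.
have D12 : D1 = D2.
  rewrite /D1 /D2 (eq_bigr (fun v => \sum_(u in S :&: V2) (e v u : nat))); last first.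
    by move=> v; rewrite inE => /andP[_ /N1] /dS_sum ->.
  rewrite [RHS](eq_bigr (fun u => \sum_(v in S :&: V1) (e v u : nat))); last first.
    move=> u; rewrite inE => /andP[_ /N2] /dS_sum ->.
    by apply: eq_bigr => v _; rewrite esym.
  by rewrite exchange_big.
have Dsum : D1 + D2 <= 2 * n.
  have := forest_sum esym eirr HF; rewrite (big_setID V1) /= SV2 cS subn1 /=.
  by [].
have L1 : a * ((n + 3 - 2 * (n - b)) %/ 2) <= D1.
  rewrite /a -sum_nat_const; apply: leq_sum => v; rewrite inE => /andP[_ v1].
  have := nb_bound S (N1 v v1); rewrite c2 => h; have := Hdeg v; lia.
have L2 : b * ((n + 3 - 2 * (n - a)) %/ 2) <= D2.
  rewrite /b -sum_nat_const; apply: leq_sum => v; rewrite inE => /andP[_ v2].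
  have := nb_bound S (N2 v v2); rewrite c1 => h; have := Hdeg v; lia.
rewrite /m -/a -/b; move: D12 Dsum L1 L2; set c := minn a b; rewrite /c => D12 Dsum L1 L2.
case: (leqP a b) => hab.

  apply: (arith (D := D1) (c := (n + 3 - 2 * (n - b)) %/ 2) ab hab bn L1); lia.

apply: (arith (D := D2) (c := (n + 3 - 2 * (n - a)) %/ 2) _ (ltnW hab) an L2); lia.
Qed.
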